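(* For $\ell\ge1$, let $\mathrm{EXACT}_2^\ell:\{0,1\}^{4\ell}\to\{0,1\}$ be defined by splitting the input $x$ into consecutive blocks $b_1,\dots,b_\ell$ of 4 bits each and setting $\mathrm{EXACT}_2^\ell(x_1,\dots,x_{4\ell})=1$ if and only if each block $b_i$ contains exactly two 1s. Then $Q_E(\mathrm{EXACT}_2^\ell)=2\ell$ and $D(\mathrm{EXACT}_2^\ell)=4\ell$.
   Context: $D(h)$ (exact classical query complexity / decision tree complexity) is the minimum depth of a decision tree computing $h$; a decision tree is a rooted binary tree whose internal vertices are labelled by input variables $x_i$ (query $x_i$, go to left child if $0$, right child if $1$) and whose leaves are labelled by output values $0$ or $1$; its depth is the maximum root-to-leaf path length. Quantum query model: a $t$-query quantum query algorithm on inputs $x\in\{0,1\}^m$ acts on a Hilbert space $\mathcal H_{\rm in}\otimes\mathcal H_{\rm work}\otimes\mathcal H_{\rm out}$, where $\mathcal H_{\rm in}$ has orthonormal basis $|0\rangle,\dots,|m\rangle$, $\mathcal H_{\rm work}$ is a finite-dimensional workspace of arbitrary size, and $\mathcal H_{\rm out}$ is one qubit. It is specified by input-independent unitaries $U_0,\dots,U_t$, and on input $x$ produces the state $U_tO_xU_{t-1}O_x\cdots O_xU_0|0\rangle$ ($t$ applications of $O_x$), where the oracle $O_x$ acts on $\mathcal H_{\rm in}$ by $|i\rangle\mapsto(-1)^{x_i}|i\rangle$ with the convention $x_0=0$ (and as the identity on the other registers). The output is obtained by measuring $\mathcal H_{\rm out}$ in the computational basis. The algorithm computes $h$ exactly if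 for every $x$ the output equals $h(x)$ with probability $1$. $Q_E(h)$ is the minimum $t$ such that some $t$-query quantum query algorithm computes $h$ exactly. *)

(* Defs.v *)
From HB Require Import structures.
From mathcomp Require Import all_boot all_order all_algebra.
Set Implicit Arguments. Unset Strict Implicit. Unset Printing Implicit Defensive.
Import Order.TTheory GRing.Theory Num.Theory.
Local Open Scope ring_scope.

(* an input x in {0,1}^m is a function 'I_m -> bool (x_1..x_m are x 0 .. x (m-1)) *)
Definition boolfun (m : nat) := ('I_m -> bool) -> bool.

Inductive dtree (m : nat) : Type :=
  | Leaf : bool -> dtree m
  | Node : 'I_m -> dtree m -> dtree m -> dtree m.
Arguments Leaf {m}.
Arguments Node {m}.

Fixpoint dt_eval m (T : dtree m) (x : 'I_m -> bool) : bool :=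
  match T with
  | Leaf b => b
  | Node i l r => if x i then dt_eval r x else dt_eval l x
  end.

Fixpoint dt_depth m (T : dtree m) : nat :=
  match T with
  | Leaf _ => 0
  | Node _ l r => (maxn (dt_depth l) (dt_depth r)).+1
  end.

Definition D_is m (h : boolfun m) (n : nat) : Prop :=
  (exists T : dtree m, (forall x, dt_eval T x = h x) /\ dt_depth T = n) /\
  (forall T : dtree m, (forall x, dt_eval T x = h x) -> (n <= dt_depth T)%N).

(* Computational basis of H_in (x) H_work (x) H_out:
   H_in has basis |0>,...,|m>  ('I_m.+1),
   H_work is of arbitrary finite dimension w.+1 ('I_w.+1),
   H_out is one qubit (bool). Scalars: an algebraically closed
   numeric field C with conjugation (e.g. the complex numbers). *)
Definition basis (m w : nat) := ('I_m.+1 * 'I_w.+1 * bool)%type.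

Section Quantum.
Variable C : numClosedFieldType.
Variables m w : nat.
Local Notation S := (basis m w).

Definition qstate := S -> C.
Definition qop := S -> S -> C.

Definition apply_op (U : qop) (v : qstate) : qstate :=
  fun s => \sum_(s' : S) U s s' * v s'.

Definition unitary (U : qop) : Prop :=
  forall s s' : S, \sum_(k : S) Num.conj (U k s) * U k s' = (s == s')%:R.

(* x_i with the convention x_0 = 0; index i : 'I_m.+1 encodes |i>,
   and for i >= 1, x_i is x (i-1). *)
Definition xbit (x : 'I_m -> bool) (i : 'I_m.+1) : bool :=
  if unlift ord0 i is Some j then x j else false.

Definition oracle (x : 'I_m -> bool) (v : qstate) : qstate :=
  fun s => (if xbit x s.1.1 then -1 else 1) * v s.

Definition init_state : qstate :=
  fun s => (s == (ord0, ord0, false))%:R.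

Fixpoint run (U : nat -> qop) (k : nat) (x : 'I_m -> bool) : qstate :=
  match k with
  | 0 => apply_op (U 0%N) init_state
  | k'.+1 => apply_op (U k) (oracle x (run U k' x))
  end.

Definition prob_out (v : qstate) (b : bool) : C :=
  \sum_(s : S | s.2 == b) `|v s| ^+ 2.

End Quantum.

Definition exact_qalg (C : numClosedFieldType) m (h : boolfun m) (t : nat) : Prop :=
  exists (w : nat) (U : nat -> qop C m w),
    (forall k, (k <= t)%N -> unitary (U k)) /\
    (forall x : 'I_m -> bool, prob_out (run U t x) (h x) = 1).

Definition QE_is (C : numClosedFieldType) m (h : boolfun m) (n : nat) : Prop :=
  exact_qalg C h n /\ (forall t, exact_qalg C h t -> (n <= t)%N).

(* blocks b_i = bits with (0-based) indices 4i, 4i+1, 4i+2, 4i+3 *)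
Definition exact2 (l : nat) : boolfun (4 * l) :=
  fun x => [forall i : 'I_l,
              #|[pred k : 'I_(4 * l) | (k %/ 4 == i)%N && x k]| == 2%N].
Arguments exact2 l x : clear implicits.

(* Submission.v *)
Require Import Defs.
From HB Require Import structures.
From mathcomp Require Import all_boot all_order all_algebra.
From mathcomp Require Import zify ring.
From Stdlib Require Import FunctionalExtensionality.
Set Implicit Arguments. Unset Strict Implicit. Unset Printing Implicit Defensive.
Import Order.TTheory GRing.Theory Num.Theory.

Lemma dt_path m (T : dtree m) (x : 'I_m -> bool) : exists Q : seq 'I_m,
  (size Q <= dt_depth T)%N /\
  forall y, (forall i, i \in Q -> y i = x i) -> dt_eval T y = dt_eval T x.
Proof.
elim: T => [b|i l IHl r IHr] /=.
  by exists [::]; split.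
case hx: (x i).
  have [Q [hs hQ]] := IHr.
  exists (i :: Q); split; first by rewrite /= ltnS (leq_trans hs) // leq_maxr.
  move=> y hy; rewrite hy ?mem_head // hx; apply: hQ => k hk.
  by apply: hy; rewrite in_cons hk orbT.
have [Q [hs hQ]] := IHl.
exists (i :: Q); split; first by rewrite /= ltnS (leq_trans hs) // leq_maxl.
move=> y hy; rewrite hy ?mem_head // hx; apply: hQ => k hk.
by apply: hy; rewrite in_cons hk orbT.
Qed.

Definition setb m (i : 'I_m) (b : bool) (x : 'I_m -> bool) : 'I_m -> bool :=
  fun k => if k == i then b else x k.

Fixpoint build m (L : seq 'I_m) (g : ('I_m -> bool) -> bool) : dtree m :=
  match L with
  | [::] => Leaf (g (fun _ => false))
  | i :: L' => Node i (build L' (fun x => g (setb i false x)))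
                      (build L' (fun x => g (setb i true x)))
  end.

Lemma build_depth m (L : seq 'I_m) g : dt_depth (build L g) = size L.
Proof. by elim: L g => [|i L IH] g //=; rewrite !IH maxnn. Qed.

Lemma build_eval m (L : seq 'I_m) g :
  (forall x y, (forall i, i \in L -> x i = y i) -> g x = g y) ->
  forall x, dt_eval (build L g) x = g x.
Proof.
elim: L g => [|i L IH] g hg x /=; first by apply: hg.
have key : forall b, dt_eval (build L (fun x => g (setb i b x))) x = g (setb i b x).
  move=> b; apply: IH => y z hyz; apply: hg => k; rewrite in_cons /setb.
  by case: eqP => //= _ /hyz.
have hs : g (setb i (x i) x) = g x.
  by apply: hg => k _; rewrite /setb; case: eqP => // ->.
by case hx: (x i); rewrite key -hs hx.
Qed.

Lemma blk_lt l (i : 'I_l) (j : 'I_4) : (4 * i + j < 4 * l)%N.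
Proof. have := ltn_ord i; have := ltn_ord j; lia. Qed.
Definition blk l (i : 'I_l) (j : 'I_4) : 'I_(4 * l) := Ordinal (blk_lt i j).

Lemma sum_block (R : nmodType) l (i : 'I_l) (F : 'I_(4 * l) -> R) :
  (\sum_(k : 'I_(4 * l) | (k %/ 4 == i)%N) F k = \sum_(j < 4) F (blk i j))%R.
Proof.
have inj : {in 'I_4 &, injective (blk i)}.
  by move=> a b _ _ /(congr1 val) /= h; apply: val_inj => /=; lia.
rewrite -(big_imset _ inj); apply: eq_bigl => k.
apply/eqP/imsetP => [h|[j _ ->]].
  have hk : (k %% 4 < 4)%N by rewrite ltn_mod.
  exists (Ordinal hk) => //; apply: val_inj => /=.
  by rewrite -h; have := divn_eq k 4; lia.
by rewrite /=; have := ltn_ord j; lia.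
Qed.

Lemma count_block l (i : 'I_l) (x : 'I_(4 * l) -> bool) :
  #|[pred k : 'I_(4 * l) | (k %/ 4 == i)%N && x k]| = (\sum_(j < 4) x (blk i j))%N.
Proof.
rewrite -sum1_card big_mkcondr /= sum_block.
by apply: eq_bigr => j _; case: (x _).
Qed.

Lemma exact2E l (x : 'I_(4 * l) -> bool) :
  exact2 l x = [forall i : 'I_l, (\sum_(j < 4) x (blk i j) == 2)%N].
Proof. by apply: eq_forallb => i; rewrite count_block. Qed.

Definition x0 l : 'I_(4 * l) -> bool := fun k => (k %% 4 < 2)%N.
Arguments x0 l k : clear implicits.

Lemma x0_exact l : exact2 l (x0 l).
Proof.
rewrite exact2E; apply/forallP => i.
rewrite !big_ord_recr big_ord0 /x0 /=.
have h : forall j, (j < 4)%N -> ((4 * i + j) %% 4 = j)%N by move=> j hj; lia.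
by rewrite !h.
Qed.

Lemma flip_sum (r : nat) : (r < 4)%N ->
  (\sum_(j < 4) (if (j == r :> nat) then ~~ (j < 2)%N else (j < 2)%N) : nat) != 2%N.
Proof.
by rewrite !big_ord_recr big_ord0 /=; case: r => [|[|[|[|]]]].
Qed.

Lemma D_exact2 l : (1 <= l)%N -> D_is (exact2 l) (4 * l).
Proof.
move=> hl; split.
  exists (build (enum 'I_(4 * l)) (exact2 l)); split; last first.
    by rewrite build_depth size_enum_ord.
  apply: build_eval => x y hxy.
  by have -> : x = y by apply: functional_extensionality => k; apply: hxy; rewrite mem_enum.
move=> T hT; rewrite leqNgt; apply/negP => hd.
have [Q [hs hQ]] := dt_path T (x0 l).
have [j hj] : exists j, j \notin Q.
  apply/existsP; rewrite -negb_forall; apply/negP => /forallP hall.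
  have : (#|'I_(4 * l)| <= size Q)%N.
    apply: leq_trans (card_size Q); apply: subset_leq_card; apply/subsetP => k _.
    exact: hall.
  rewrite card_ord; lia.
pose y := fun k => if k == j then ~~ x0 l k else x0 l k.
have : dt_eval T y = dt_eval T (x0 l).
  apply: hQ => k hk; rewrite /y; case: eqP => // e; by rewrite -e hk in hj.
rewrite !hT x0_exact exact2E => /forallP.
have hi : (j %/ 4 < l)%N by have := ltn_ord j; lia.
move=> /(_ (Ordinal hi)); apply/negP.
have e : forall j' : 'I_4, y (blk (Ordinal hi) j') = (if (j' == j %% 4 :> nat) then ~~ (j' < 2)%N else (j' < 2)%N).
  move=> j'; rewrite /y /x0 /=.
  have hm : ((4 * (j %/ 4) + j') %% 4 = j')%N by have := ltn_ord j'; lia.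
  rewrite hm.
  have -> : (blk (Ordinal hi) j' == j) = (j' == j %% 4 :> nat).
    apply/eqP/eqP => [/(congr1 val) /= <-|h]; first by rewrite hm.
    apply: val_inj => /=; rewrite h; have := divn_eq j 4; lia.
  done.
under eq_bigr => j' _ do rewrite e.
by apply: flip_sum; rewrite ltn_mod.
Qed.

Local Open Scope ring_scope.

Section Poly.
Variable C : numClosedFieldType.
Variable m : nat.

Definition sgnb (b : bool) : C := if b then -1 else 1.
Definition chi (L : seq 'I_m) (x : 'I_m -> bool) : C := \prod_(j <- L) sgnb (x j).
Definition deg_le (d : nat) (f : ('I_m -> bool) -> C) :=
  exists s : seq (C * seq 'I_m), all (fun p => size p.2 <= d)%N s /\
    forall x, f x = \sum_(p <- s) p.1 * chi p.2 x.

Lemma deg_le_const d c : deg_le d (fun _ => c).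
Proof.
exists [:: (c, [::])]; split => //= x.
by rewrite big_cons big_nil /chi big_nil mulr1 addr0.
Qed.

Lemma deg_le_mono d d' f : (d <= d')%N -> deg_le d f -> deg_le d' f.
Proof.
move=> hd [s [hs hf]]; exists s; split => //.
by apply/allP => p /(allP hs) /leq_trans; apply.
Qed.

Lemma deg_le_add d f g : deg_le d f -> deg_le d g -> deg_le d (fun x => f x + g x).
Proof.
move=> [s [hs hf]] [t [ht hg]]; exists (s ++ t); split.
  by rewrite all_cat hs ht.
by move=> x; rewrite big_cat /= hf hg.
Qed.

Lemma deg_le_sum d (I : finType) (F : I -> ('I_m -> bool) -> C) :
  (forall i, deg_le d (F i)) -> deg_le d (fun x => \sum_i F i x).
Proof.
move=> hF.
suff : forall r : seq I, deg_le d (fun x => \sum_(i <- r) F i x).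
  by move=> /(_ (index_enum I)).
elim => [|i r IH].
  by have [s hs] := deg_le_const d 0; exists s; move: hs => [h1 h2]; split => // x; rewrite big_nil -h2.
have [s [hs hf]] := deg_le_add (hF i) IH.
by exists s; split => // x; rewrite big_cons -hf.
Qed.

Lemma chi_cat L1 L2 x : chi (L1 ++ L2) x = chi L1 x * chi L2 x.
Proof. by rewrite /chi big_cat. Qed.

Lemma deg_le_mul d1 d2 f g : deg_le d1 f -> deg_le d2 g ->
  deg_le (d1 + d2) (fun x => f x * g x).
Proof.
move=> [s [hs hf]] [t [ht hg]].
exists [seq (p.1 * q.1, p.2 ++ q.2) | p <- s, q <- t]; split.
  apply/allP => z /allpairsP [[p q] [hp hq ->]] /=.
  by rewrite size_cat leq_add // ?(allP hs p hp) ?(allP ht q hq).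
move=> x; rewrite hf hg big_allpairs_dep big_distrl /=.
apply: eq_bigr => p _; rewrite big_distrr /=; apply: eq_bigr => q _.
rewrite chi_cat; ring.
Qed.

Lemma chi_conj L x : (chi L x)^* = chi L x.
Proof.
rewrite /chi rmorph_prod; apply: eq_bigr => j _.
by rewrite /sgnb; case: (x j); rewrite ?rmorphN1 ?rmorph1.
Qed.

Lemma deg_le_conj d f : deg_le d f -> deg_le d (fun x => (f x)^*).
Proof.
move=> [s [hs hf]]; exists [seq (p.1^*, p.2) | p <- s]; split.
  by rewrite all_map.
move=> x; rewrite hf rmorph_sum big_map; apply: eq_bigr => p _.
by rewrite rmorphM /=; congr (_ * _); apply: chi_conj.
Qed.

Lemma deg_le_xbit (i : 'I_m.+1) : deg_le 1 (fun x => if xbit x i then -1 else 1 : C).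
Proof.
rewrite /xbit; case: (unlift ord0 i) => [j|]; last exact: deg_le_const.
exists [:: (1, [:: j])]; split => // x.
by rewrite big_cons big_nil /chi big_cons big_nil /sgnb mul1r mulr1 addr0.
Qed.

Definition sgnall (x : {ffun 'I_m -> bool}) : C := \prod_(i : 'I_m) sgnb (x i).

Definition flipf (j : 'I_m) (x : {ffun 'I_m -> bool}) : {ffun 'I_m -> bool} :=
  [ffun k => if k == j then ~~ x k else x k].

Lemma flipfK j : involutive (flipf j).
Proof.
move=> x; apply/ffunP => k; rewrite !ffunE; case: eqP => //; by rewrite negbK.
Qed.

Lemma sum_chi_zero (L : seq 'I_m) : (size L < m)%N ->
  \sum_(x : {ffun 'I_m -> bool}) sgnall x * chi L x = 0.
Proof.
move=> hL.
have [j hj] : exists j, j \notin L.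
  apply/existsP; rewrite -negb_forall; apply/negP => /forallP hall.
  have : (#|'I_m| <= size L)%N.
    apply: leq_trans (card_size L); apply: subset_leq_card; apply/subsetP => k _.
    exact: hall.
  rewrite card_ord; lia.
set S := \sum_x _.
have hS : S = - S.
  rewrite {1}/S (reindex_inj (inv_inj (flipfK j))) /S -sumrN.
  apply: eq_bigr => x _.
  have -> : chi L (flipf j x) = chi L x.
    rewrite /chi; apply: eq_big_seq => k hk; rewrite ffunE.
    by case: eqP => // e; rewrite -e hk in hj.
  have -> : sgnall (flipf j x) = - sgnall x.
    rewrite /sgnall (bigD1 j) //= [in RHS](bigD1 j) //= ffunE eqxx.
    have -> : \prod_(k | k != j) sgnb (flipf j x k) = \prod_(k | k != j) sgnb (x k).
      by apply: eq_bigr => k hk; rewrite ffunE (negbTE hk).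
    by rewrite /sgnb; case: (x j) => /=; ring.
  by rewrite mulNr.
have : S *+ 2 == 0 by rewrite mulr2n {1}hS addNr.
by rewrite mulrn_eq0 /= => /eqP.
Qed.

Lemma deg_le_sum_zero d f : deg_le d f -> (d < m)%N ->
  \sum_(x : {ffun 'I_m -> bool}) sgnall x * f x = 0.
Proof.
move=> [s [hs hf]] hd.
under eq_bigr => x _ do rewrite hf big_distrr.
rewrite exchange_big /= big1_seq // => p /andP [_ hp].
under eq_bigr => x _ do rewrite mulrCA.
rewrite -big_distrr /= sum_chi_zero ?mulr0 //.
exact: leq_ltn_trans (allP hs p hp) hd.
Qed.

End Poly.

Section Norm.
Variable C : numClosedFieldType.
Variables m w : nat.
Local Notation S := (basis m w).

Lemma apply_norm (U : qop C m w) (v : qstate C m w) : unitary U ->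
  \sum_(s : S) `|apply_op U v s| ^+ 2 = \sum_(s : S) `|v s| ^+ 2.
Proof.
move=> hU.
have e1 : forall s, `|apply_op U v s| ^+ 2 =
    \sum_(a : S) \sum_(b : S) (v a * (v b)^*) * ((U s b)^* * U s a).
  move=> s; rewrite normCK /apply_op rmorph_sum big_distrl /=.
  apply: eq_bigr => a _; rewrite big_distrr /=; apply: eq_bigr => b _.
  rewrite rmorphM /=; ring.
under eq_bigr => s _ do rewrite e1.
rewrite exchange_big /=; apply: eq_bigr => a _.
rewrite exchange_big /=.
under eq_bigr => b _ do rewrite -big_distrr /= hU.
rewrite normCK (bigD1 a) //= eqxx mulr1 big1 ?addr0 //.
by move=> b /negbTE; rewrite eq_sym => ->; rewrite mulr0.
Qed.

Lemma oracle_norm x (v : qstate C m w) :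
  \sum_(s : S) `|oracle x v s| ^+ 2 = \sum_(s : S) `|v s| ^+ 2.
Proof.
by apply: eq_bigr => s _; rewrite /oracle normrM; case: (xbit _ _); rewrite ?normrN ?normr1 mul1r.
Qed.

Lemma init_norm : \sum_(s : S) `|@init_state C m w s| ^+ 2 = 1.
Proof.
rewrite (bigD1 (ord0, ord0, false)) //= big1 ?addr0 /init_state ?eqxx ?normr1 ?expr1n //.
by move=> s /negbTE ->; rewrite normr0 expr0n.
Qed.

Lemma run_norm (U : nat -> qop C m w) t x : (forall k, (k <= t)%N -> unitary (U k)) ->
  \sum_(s : S) `|run U t x s| ^+ 2 = 1.
Proof.
elim: t => [|t IH] hU /=.
  by rewrite apply_norm; [exact: init_norm | exact: hU].
rewrite apply_norm; last exact: hU.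
rewrite oracle_norm IH // => k hk; apply: hU; exact: leqW.
Qed.

Lemma prob_split (v : qstate C m w) :
  prob_out v true + prob_out v false = \sum_(s : S) `|v s| ^+ 2.
Proof.
rewrite /prob_out [RHS](bigID (fun s : S => s.2 == true)) /=; congr (_ + _).
by apply: eq_bigl => s; case: (s.2).
Qed.

Lemma run_deg (U : nat -> qop C m w) t (s : S) : deg_le t (fun x => run U t x s).
Proof.
elim: t s => [|t IH] s /=.
  exact: deg_le_const.
rewrite /apply_op /oracle.
apply: deg_le_sum => s'.
have := deg_le_mul (@deg_le_const C m 0 (U t.+1 s s')) (deg_le_mul (@deg_le_xbit C m s'.1.1) (IH s')).
by rewrite add0n add1n.
Qed.

End Norm.

Lemma QE_lower (C : numClosedFieldType) m (h : boolfun m) t :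
  exact_qalg C h t -> (t + t < m)%N ->
  \sum_(x : {ffun 'I_m -> bool}) @sgnall C m x * (h x)%:R = 0.
Proof.
move=> [w [U [hU hP]]] ht.
have hP1 : forall x, prob_out (run U t x) true = (h x)%:R.
  move=> x; have := prob_split (run U t x); rewrite run_norm //.
  have := hP x; case: (h x) => -> //.
  by move/(congr1 (fun z => z - 1)); rewrite addrK subrr.
have hd : deg_le (t + t) (fun x : 'I_m -> bool => prob_out (run U t x) true).
  have [q [hq1 hq2]] : deg_le (t + t) (fun x => \sum_(s : basis m w)
      (if s.2 == true then run U t x s * (run U t x s)^* else 0)).
    apply: deg_le_sum => s; case: (s.2 == true); last exact: (@deg_le_const C m).
    exact: deg_le_mul (run_deg U t s) (deg_le_conj (run_deg U t s)).
  exists q; split => // x; rewrite -hq2 /prob_out big_mkcond /=.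
  by apply: eq_bigr => s _; rewrite normCK.
have := deg_le_sum_zero hd ht.
by under eq_bigr => x _ do rewrite hP1.
Qed.

Lemma weight_exact2 l (x : 'I_(4 * l) -> bool) : exact2 l x ->
  (\sum_(k : 'I_(4 * l)) (x k : nat) = 2 * l)%N.
Proof.
rewrite exact2E => /forallP hx.
have hp : forall k : 'I_(4 * l), (k %/ 4 < l)%N by move=> k; have := ltn_ord k; lia.
rewrite (partition_big (fun k => Ordinal (hp k)) xpredT) //=.
rewrite (eq_bigr (fun _ => 2%N)); first by rewrite sum_nat_const card_ord mulnC.
move=> i _; rewrite -[RHS](eqP (hx i)).
have := sum_block (R := nat) i (fun k => (x k : nat)); rewrite /= => <-.
by apply: eq_bigl => k; rewrite -(inj_eq val_inj).
Qed.

Lemma exact2_sum_ne0 (C : numClosedFieldType) l :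
  \sum_(x : {ffun 'I_(4 * l) -> bool}) @sgnall C _ x * (exact2 l x)%:R != 0.
Proof.
have e : forall x : {ffun 'I_(4 * l) -> bool},
    @sgnall C _ x * (exact2 l x)%:R = ((exact2 l x : nat)%:R).
  move=> x; case hx: (exact2 l x); rewrite ?mulr0 // mulr1.
  rewrite /sgnall (eq_bigr (fun i => (-1) ^+ (x i : nat))); last first.
    by move=> i _; rewrite /sgnb; case: (x i); rewrite ?expr1 ?expr0.
  by rewrite prodrXr weight_exact2 // exprM sqrrN !expr1n.
under eq_bigr => x _ do rewrite e.
rewrite -natr_sum pnatr_eq0 -lt0n.
rewrite (bigD1 [ffun k => x0 l k]) //=.
have -> : exact2 l [ffun k => x0 l k] = true.
  by rewrite -(x0_exact l); congr (exact2 l); apply: functional_extensionality => k; rewrite ffunE.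
by [].
Qed.

Lemma QE_exact2_lower (C : numClosedFieldType) l t :
  exact_qalg C (exact2 l) t -> (2 * l <= t)%N.
Proof.
move=> hq; rewrite leqNgt; apply/negP => ht.
have h2 := exact2_sum_ne0 C l.
have h3 : (t + t < 4 * l)%N by lia.
by rewrite (QE_lower hq h3) eqxx in h2.
Qed.

Section Ops.
Variable C : numClosedFieldType.
Variables m w : nat.
Local Notation S := (basis m w).
Local Notation qst := (qstate C m w).
Local Notation qo := (qop C m w).

Definition inner (v f : qst) : C := \sum_(s : S) (v s)^* * f s.
Definition phase (v : qst) (c : C) : qo :=
  fun s s' => (s == s')%:R + (c - 1) / inner v v * (v s * (v s')^*).
Definition qmul (U V : qo) : qo := fun s s' => \sum_(k : S) U s k * V k s'.
Definition dlt (p : S) : qst := fun s => (s == p)%:R.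

Lemma sum_dlt (p : S) (F : S -> C) : \sum_(s : S) (s == p)%:R * F s = F p.
Proof.
rewrite (bigD1 p) //= eqxx mul1r big1 ?addr0 // => s /negbTE ->; by rewrite mul0r.
Qed.

Lemma sum_dlt' (p : S) (F : S -> C) : \sum_(s : S) F s * (p == s)%:R = F p.
Proof.
rewrite (bigD1 p) //= eqxx mulr1 big1 ?addr0 // => s; rewrite eq_sym => /negbTE ->; by rewrite mulr0.
Qed.

Lemma sum_dltl (p : S) (F : S -> C) : \sum_(s : S) (p == s)%:R * F s = F p.
Proof. by under eq_bigr => s _ do rewrite eq_sym; apply: sum_dlt. Qed.

Lemma inner_conj (v : qst) : (inner v v)^* = inner v v.
Proof.
rewrite /inner rmorph_sum; apply: eq_bigr => s _; by rewrite rmorphM /= conjCK mulrC.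
Qed.

Lemma apply_phase v c f s :
  apply_op (phase v c) f s = f s + (c - 1) / inner v v * inner v f * v s.
Proof.
rewrite /apply_op /phase.
under eq_bigr => s' _ do rewrite mulrDl.
rewrite big_split /= sum_dltl; congr (_ + _).
rewrite /inner [RHS]mulrAC big_distrr /=; apply: eq_bigr => s' _; ring.
Qed.

Lemma phase_unitary v c : c * c^* = 1 -> unitary (phase v c).
Proof.
move=> hc s s'.
set n := inner v v; set a := (c - 1) / n.
have ha : a^* = (c^* - 1) / n.
  by rewrite /a fmorph_div rmorphB rmorph1 /= inner_conj.
have key : a + a^* + a * a^* * n = 0.
  rewrite ha /a; have [->|hn] := eqVneq n 0; first by rewrite !invr0 !mulr0 !addr0.
  transitivity ((c * c^* - 1) / n); last by rewrite hc subrr mul0r.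
  by field.
rewrite /phase -/n -/a.
transitivity (\sum_(k : S) ((k == s)%:R * (k == s')%:R
   + (k == s)%:R * (a * (v k * (v s')^*))
   + (k == s')%:R * (a^* * ((v k)^* * v s))
   + a^* * a * ((v k)^* * v k) * (v s * (v s')^*))).
  apply: eq_bigr => k _; rewrite rmorphD !rmorphM /= conjCK.
  rewrite (_ : ((k == s)%:R)^* = (k == s)%:R); last by case: (k == s); rewrite ?rmorph1 ?rmorph0.
  ring.
rewrite !big_split /= !sum_dlt -big_distrl -big_distrr /=.
rewrite (_ : \sum_i _ = n) //.
rewrite (_ : _ + _ = (s == s')%:R + (v s * (v s')^*) * (a + a^* + a * a^* * n)); last by ring.
by rewrite key mulr0 addr0.
Qed.


Lemma qmul_unitary U V : unitary U -> unitary V -> unitary (qmul U V).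
Proof.
move=> hU hV s s'; rewrite /qmul.
transitivity (\sum_(a : S) \sum_(b : S) ((V a s)^* * V b s') * \sum_(k : S) (U k a)^* * U k b).
  under eq_bigr => k _ do rewrite rmorph_sum big_distrl /=.
  rewrite exchange_big /=; apply: eq_bigr => a _.
  under eq_bigr => k _ do rewrite big_distrr /=.
  rewrite exchange_big /=; apply: eq_bigr => b _.
  rewrite big_distrr /=; apply: eq_bigr => k _; rewrite rmorphM /=; ring.
under eq_bigr => a _ do under eq_bigr => b _ do rewrite hU.
rewrite -(hV s s'); apply: eq_bigr => a _.
by rewrite (bigD1 a) //= eqxx mulr1 big1 ?addr0 // => b /negbTE; rewrite eq_sym => ->; rewrite mulr0.
Qed.

Lemma apply_qmul U V f s : apply_op (qmul U V) f s = apply_op U (apply_op V f) s.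
Proof.
rewrite /apply_op /qmul.
under eq_bigr => s' _ do rewrite big_distrl /=.
rewrite exchange_big /=; apply: eq_bigr => k _.
rewrite big_distrr /=; apply: eq_bigr => s' _; ring.
Qed.

Lemma apply_lin U (a : C) (f g : qst) s :
  apply_op U (fun s => a * f s + g s) s = a * apply_op U f s + apply_op U g s.
Proof.
rewrite /apply_op big_distrr -big_split /=; apply: eq_bigr => s' _; ring.
Qed.

Lemma oracle_lin x (a : C) (f g : qst) s :
  oracle x (fun s => a * f s + g s) s = a * oracle x f s + oracle x g s.
Proof. rewrite /oracle; ring. Qed.

Lemma oracleK x (f : qst) s : oracle x (oracle x f) s = f s.
Proof. by rewrite /oracle; case: (xbit x s.1.1) => /=; ring. Qed.

Lemma inner_disj (v f : qst) : (forall s, v s = 0 \/ f s = 0) -> inner v f = 0.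
Proof.
move=> h; rewrite /inner big1 // => s _; case: (h s) => ->; by rewrite ?rmorph0 ?mul0r ?mulr0.
Qed.

Lemma apply_phase_id v c f : (forall s, v s = 0 \/ f s = 0) -> forall s, apply_op (phase v c) f s = f s.
Proof. by move=> h s; rewrite apply_phase (inner_disj h) mulr0 mul0r addr0. Qed.

Lemma inner_subl (a b f : qst) : inner (fun s => a s - b s) f = inner a f - inner b f.
Proof. rewrite /inner -sumrB; apply: eq_bigr => s _; rewrite rmorphB /=; ring. Qed.

Lemma inner_dlt p f : inner (dlt p) f = f p.
Proof.
rewrite /inner -[RHS](sum_dlt p f); apply: eq_bigr => s _.
by rewrite /dlt; case: (s == p); rewrite ?rmorph1 ?rmorph0.
Qed.

Lemma inner_ext v f g : (forall s, f s = g s) -> inner v f = inner v g.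
Proof. by move=> h; apply: eq_bigr => s _; rewrite h. Qed.

Lemma inner_extl v v' f : (forall s, v s = v' s) -> inner v f = inner v' f.
Proof. by move=> h; apply: eq_bigr => s _; rewrite h. Qed.

Lemma apply_ext (U : qo) (f g : qst) : (forall s, f s = g s) -> forall s, apply_op U f s = apply_op U g s.
Proof. by move=> h s; apply: eq_bigr => s' _; rewrite h. Qed.

End Ops.

Section Alg.
Variable C : numClosedFieldType.
Variable l : nat.
Local Notation S := (basis (4 * l) l).
Local Notation qst := (qstate C (4 * l) l).
Local Notation qo := (qop C (4 * l) l).
Local Notation dl := (@dlt C (4 * l) l).

Definition pos (s : S) : option 'I_(4 * l) := unlift ord0 s.1.1.
Definition inblk (k : nat) (s : S) : bool :=
  ~~ s.2 && (s.1.2 == ord0) && (if pos s is Some i then (i %/ 4 == k)%N else false).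
Definition jdx (s : S) : nat := if pos s is Some i then (i %% 4)%N else 0%N.
Definition ub k : qst := fun s => if inblk k s then 2^-1 else 0.
Definition chi2 (j : nat) : C := if odd j then -1 else 1.
Definition chi3 (j : nat) : C := if (j == 1)%N || (j == 2)%N then -1 else 1.
Definition hv2 k : qst := fun s => if inblk k s then 2^-1 * chi2 (jdx s) else 0.
Definition hv3 k : qst := fun s => if inblk k s then 2^-1 * chi3 (jdx s) else 0.
Definition pstart : S := (ord0, ord0, false).
Definition pend : S := (ord0, ord0, true).
Definition zp k : S := (ord0, inord k.+1, false).
Definition lev k : qst :=
  if k == 0%N then dl pstart else if (k <= l)%N then ub k.-1 else dl pend.
Definition om : C := (-1 + 'i * sqrtC 3) / 2.
Definition reflq (v : qst) : qo := phase v (-1).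
Definition Tk k : qo := reflq (fun s => lev k s - lev k.+1 s).
Definition Bk k : qo := qmul (reflq (fun s => ub k s - dl (zp k) s))
  (qmul (phase (hv2 k) om) (phase (hv3 k) (-1 - om))).
Definition Ualg (n : nat) : qo := if odd n then Bk n./2 else Tk n./2.

Lemma om_conj : om^* = -1 - om.
Proof.
rewrite /om fmorph_div rmorphD rmorphN1 rmorphM /= conjCi.
rewrite (geC0_conj (x := sqrtC 3)); last by rewrite sqrtC_ge0 ler0n.
rewrite (_ : (2 : C)^* = 2); last by rewrite rmorph_nat.
by field.
Qed.

Lemma om_sq : om ^+ 2 + om + 1 = 0.
Proof.
rewrite /om.
have h3 : sqrtC 3 ^+ 2 = 3 :> C by rewrite sqrtCK.
have hi : 'i ^+ 2 = -1 :> C by rewrite sqrCi.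
rewrite (_ : ((-1 + 'i * sqrtC 3) / 2) ^+ 2 = (1 - 2 * 'i * sqrtC 3 + 'i ^+ 2 * sqrtC 3 ^+ 2) / 4); last by field.
rewrite h3 hi; by field.
Qed.

Lemma unit_om : om * om^* = 1.
Proof. rewrite om_conj; have := om_sq; move=> h; rewrite -[RHS]subr0 -h; ring. Qed.

Lemma unit_c3 : (-1 - om) * (-1 - om)^* = 1.
Proof.
rewrite rmorphB rmorphN1 /= om_conj; have := om_sq; move=> h; rewrite -[RHS]subr0 -h; ring.
Qed.

Lemma unit_m1 : (-1 : C) * (-1)^* = 1.
Proof. by rewrite rmorphN1 mulrNN mulr1. Qed.

Lemma Ualg_unitary n : unitary (Ualg n).
Proof.
rewrite /Ualg; case: (odd n).
  apply: qmul_unitary; first exact: phase_unitary unit_m1.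
  apply: qmul_unitary; [exact: phase_unitary unit_om | exact: phase_unitary unit_c3].
exact: phase_unitary unit_m1.
Qed.

End Alg.

Section Geo.
Variable C : numClosedFieldType.
Variable l : nat.
Local Notation S := (basis (4 * l) l).
Local Notation qst := (qstate C (4 * l) l).
Local Notation ub := (@ub C l).
Local Notation hv2 := (@hv2 C l).
Local Notation hv3 := (@hv3 C l).
Local Notation inblk := (@inblk l).
Local Notation pos := (@pos l).
Local Notation jdx := (@jdx l).
Local Notation zp := (zp l).
Local Notation dl := (@dlt C (4 * l) l).

Definition ptb (k : 'I_l) (j : 'I_4) : S := (lift ord0 (blk k j), ord0, false).

Lemma pos_pt (k : 'I_l) (j : 'I_4) : pos (ptb k j) = Some (blk k j).
Proof. by rewrite /pos /= liftK. Qed.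

Lemma inblk_pt (k : 'I_l) (j : 'I_4) : inblk k (ptb k j).
Proof. rewrite /inblk pos_pt /=; apply/eqP; have := ltn_ord j; lia. Qed.

Lemma jdx_pt (k : 'I_l) (j : 'I_4) : jdx (ptb k j) = j.
Proof. rewrite /jdx pos_pt /=; have := ltn_ord j; lia. Qed.

Lemma pt_inj (k : 'I_l) : injective (ptb k).
Proof.
move=> a b [] h; apply: val_inj => /=; lia.
Qed.

Lemma inblk_pt_iff (k : 'I_l) s : inblk k s = (s \in [set ptb k j | j in 'I_4]).
Proof.
apply/idP/imsetP => [|[j _ ->]]; last exact: inblk_pt.
case: s => [[i1 lab] b]; rewrite /inblk /pos /=.
case: b => //=; case: eqP => //= -> ; case: (unliftP ord0 i1) => //= i -> /eqP hi.
have hj : (i %% 4 < 4)%N by rewrite ltn_mod.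
exists (Ordinal hj) => //; rewrite /ptb; congr (_, _, _); congr (lift _ _).
apply: val_inj => /=; have := divn_eq i 4; lia.
Qed.

Lemma blk_sum (k : 'I_l) (F : S -> C) :
  \sum_(s : S) (if inblk k s then F s else 0) = \sum_(j < 4) F (ptb k j).
Proof.
rewrite -big_mkcond /= -(big_imset _ (in2W (@pt_inj k))) /=.
by apply: eq_bigl => s; rewrite inblk_pt_iff.
Qed.

Lemma sum4 (F : 'I_4 -> C) :
  \sum_(j < 4) F j = F (inord 0) + F (inord 1) + F (inord 2) + F (inord 3).
Proof.
rewrite !big_ord_recr big_ord0 /= add0r.
by congr (_ + _ + _ + _); congr F; apply: val_inj; rewrite /= inordK.
Qed.

Lemma conj_half : (2^-1 : C)^* = 2^-1.
Proof. by rewrite geC0_conj // invr_ge0 ler0n. Qed.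

Lemma conj_chi2 j : (chi2 C j)^* = chi2 C j.
Proof. by rewrite /chi2; case: (odd j); rewrite ?rmorphN1 ?rmorph1. Qed.

Lemma conj_chi3 j : (chi3 C j)^* = chi3 C j.
Proof. by rewrite /chi3; case: (_ || _); rewrite ?rmorphN1 ?rmorph1. Qed.

Lemma inner_ub (k : 'I_l) f : inner (ub k) f = 2^-1 * \sum_(j < 4) f (ptb k j).
Proof.
rewrite big_distrr -(blk_sum k (fun s => 2^-1 * f s)); apply: eq_bigr => s _; rewrite /ub.
by case: (inblk k s); rewrite ?conj_half ?rmorph0 ?mul0r.
Qed.

Lemma inner_hv2 (k : 'I_l) f : inner (hv2 k) f = 2^-1 * \sum_(j < 4) chi2 C j * f (ptb k j).
Proof.
rewrite big_distrr.
transitivity (\sum_(j < 4) 2^-1 * (chi2 C (jdx (ptb k j)) * f (ptb k j))); last first.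
  by apply: eq_bigr => j _; rewrite jdx_pt.
rewrite -(blk_sum k (fun s => 2^-1 * (chi2 C (jdx s) * f s))); apply: eq_bigr => s _; rewrite /Submission.hv2.
case hs: (inblk k s); rewrite ?rmorph0 ?mul0r //.
have [j ->] : exists j, s = ptb k j.
  by move: hs; rewrite inblk_pt_iff => /imsetP [j _ ->]; exists j.
by rewrite rmorphM /= conj_half conj_chi2 mulrA.
Qed.

Lemma inner_hv3 (k : 'I_l) f : inner (hv3 k) f = 2^-1 * \sum_(j < 4) chi3 C j * f (ptb k j).
Proof.
rewrite big_distrr.
transitivity (\sum_(j < 4) 2^-1 * (chi3 C (jdx (ptb k j)) * f (ptb k j))); last first.
  by apply: eq_bigr => j _; rewrite jdx_pt.
rewrite -(blk_sum k (fun s => 2^-1 * (chi3 C (jdx s) * f s))); apply: eq_bigr => s _; rewrite /Submission.hv3.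
case hs: (inblk k s); rewrite ?rmorph0 ?mul0r //.
have [j ->] : exists j, s = ptb k j.
  by move: hs; rewrite inblk_pt_iff => /imsetP [j _ ->]; exists j.
by rewrite rmorphM /= conj_half conj_chi3 mulrA.
Qed.

Lemma ub_pt (k : 'I_l) (j : 'I_4) : ub k (ptb k j) = 2^-1.
Proof. by rewrite /Submission.ub inblk_pt. Qed.
Lemma hv2_pt (k : 'I_l) (j : 'I_4) : hv2 k (ptb k j) = 2^-1 * chi2 C j.
Proof. by rewrite /Submission.hv2 inblk_pt jdx_pt. Qed.
Lemma hv3_pt (k : 'I_l) (j : 'I_4) : hv3 k (ptb k j) = 2^-1 * chi3 C j.
Proof. by rewrite /Submission.hv3 inblk_pt jdx_pt. Qed.

Lemma inblk_zp k k' : inblk k (zp k') = false.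
Proof. by rewrite /inblk /pos /= unlift_none andbF. Qed.
Lemma ub_zp k k' : ub k (zp k') = 0.
Proof. by rewrite /Submission.ub inblk_zp. Qed.
Lemma hv2_zp k k' : hv2 k (zp k') = 0.
Proof. by rewrite /Submission.hv2 inblk_zp. Qed.
Lemma hv3_zp k k' : hv3 k (zp k') = 0.
Proof. by rewrite /Submission.hv3 inblk_zp. Qed.
Lemma dl_zp_pt (k : 'I_l) k' (j : 'I_4) : dl (zp k') (ptb k j) = 0.
Proof. by rewrite /dlt /zp /ptb; case: eqP => // [[]] /eqP; rewrite eq_sym (negbTE (neq_lift _ _)). Qed.

End Geo.

Section Blk.
Variable C : numClosedFieldType.
Variable l : nat.
Local Notation S := (basis (4 * l) l).
Local Notation qst := (qstate C (4 * l) l).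
Local Notation ub := (@ub C l).
Local Notation hv2 := (@hv2 C l).
Local Notation hv3 := (@hv3 C l).
Local Notation inblk := (@inblk l).
Local Notation pos := (@pos l).
Local Notation jdx := (@jdx l).
Local Notation zp := (zp l).
Local Notation dl := (@dlt C (4 * l) l).
Local Notation om := (om C).
Local Notation ptb := (@ptb l).

Definition bitn (x : 'I_(4 * l) -> bool) (n : nat) : bool :=
  if insub n is Some i then x i else false.

Definition Fq (b0 b1 b2 b3 : bool) : C :=
  if (b0 + b1 + b2 + b3 == 2)%N then
    (if b0 == b1 then 1 else if b0 == b2 then om else -1 - om) else 0.

Definition Ablk x (k : nat) : C :=
  Fq (bitn x (4 * k)) (bitn x (4 * k + 1)) (bitn x (4 * k + 2)) (bitn x (4 * k + 3)).

Definition sg (b : bool) : C := if b then -1 else 1.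

Lemma oracle_pt x f (k : 'I_l) (j : 'I_4) :
  oracle x f (ptb k j) = sg (x (blk k j)) * f (ptb k j).
Proof. by rewrite /oracle /xbit /= liftK. Qed.

Lemma bitn_blk x (k : 'I_l) (j : nat) : (j < 4)%N ->
  x (blk k (inord j)) = bitn x (4 * k + j).
Proof.
move=> hj; rewrite /bitn insubT; first by have := ltn_ord k; lia.
move=> h; congr x; apply: val_inj; rewrite /= inordK //.
Qed.

Lemma Acomp (k : 'I_l) x :
  inner (ub k) (oracle x (apply_op (Bk C k) (oracle x (ub k)))) = Ablk x k.
Proof.
set y0 := oracle x (ub k).
set y1 := apply_op (phase (hv3 k) (-1 - om)) y0.
set y2 := apply_op (phase (hv2 k) om) y1.
set d : qst := fun s => ub k s - dl (zp k) s.
set y3 := apply_op (reflq d) y2.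
have eB : forall s, apply_op (Bk C k) y0 s = y3 s.
  move=> s; rewrite /Bk apply_qmul; apply: apply_ext => s'.
  by rewrite apply_qmul.
have -> : inner (ub k) (oracle x (apply_op (Bk C k) y0)) = inner (ub k) (oracle x y3).
  by apply: inner_ext => s; rewrite /oracle eB.
have n3 : inner (hv3 k) (hv3 k) = 1.
  rewrite inner_hv3 sum4 !hv3_pt /chi3 !inordK //=; by field.
have n2 : inner (hv2 k) (hv2 k) = 1.
  rewrite inner_hv2 sum4 !hv2_pt /chi2 !inordK //=; by field.
have nd : inner d d = 2.
  rewrite inner_subl inner_ub inner_dlt sum4 /d !ub_pt !dl_zp_pt ub_zp /dlt eqxx (_ : true%:R = 1 :> C) //; by field.
have e1 : forall s, y1 s = y0 s + (-1 - om - 1) * inner (hv3 k) y0 * hv3 k s.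
  by move=> s; rewrite /y1 apply_phase n3 divr1.
have e2 : forall s, y2 s = y1 s + (om - 1) * inner (hv2 k) y1 * hv2 k s.
  by move=> s; rewrite /y2 apply_phase n2 divr1.
have e3 : forall s, y3 s = y2 s - inner d y2 * d s.
  move=> s; rewrite /y3 apply_phase nd.
  rewrite (_ : (-1 - 1) / 2 = -1 :> C); last by field.
  by rewrite mulN1r mulNr.
have y0z : y0 (zp k) = 0 by rewrite /y0 /oracle ub_zp mulr0.
have y2z : y2 (zp k) = 0 by rewrite e2 e1 y0z hv2_zp hv3_zp !mulr0 !addr0.
have hg : inner d y2 = inner (ub k) y2 by rewrite inner_subl inner_dlt y2z subr0.
rewrite hg in e3.
set b3 := inner (hv3 k) y0 in e1.
set b2 := inner (hv2 k) y1 in e2.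
set g := inner (ub k) y2 in e3.
have y0p : forall j, y0 (ptb k j) = sg (x (blk k j)) * 2^-1.
  by move=> j; rewrite /y0 oracle_pt ub_pt.
have hb3 : b3 = 2^-1 * \sum_(j < 4) chi3 C j * y0 (ptb k j) by rewrite /b3 inner_hv3.
have hb2 : b2 = 2^-1 * \sum_(j < 4) chi2 C j * y1 (ptb k j) by rewrite /b2 inner_hv2.
have hgg : g = 2^-1 * \sum_(j < 4) y2 (ptb k j) by rewrite /g inner_ub.
rewrite inner_ub sum4 !oracle_pt !e3 /d !ub_pt !dl_zp_pt hgg sum4 !e2 hb2 sum4 !e1 hb3 sum4.
rewrite !hv2_pt !hv3_pt !y0p.
rewrite /chi2 /chi3 !inordK // /=.
rewrite !bitn_blk // addn0 /Ablk.
case: (bitn x (4 * k)); case: (bitn x (4 * k + 1)); case: (bitn x (4 * k + 2));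
  case: (bitn x (4 * k + 3)); rewrite /Fq /sg /=; by field.
Qed.

End Blk.

Section Inv.
Variable C : numClosedFieldType.
Variable l : nat.
Local Notation S := (basis (4 * l) l).
Local Notation qst := (qstate C (4 * l) l).
Local Notation ub := (@ub C l).
Local Notation hv2 := (@hv2 C l).
Local Notation hv3 := (@hv3 C l).
Local Notation lev := (@lev C l).
Local Notation inblk := (@inblk l).
Local Notation pos := (@pos l).
Local Notation zp := (zp l).
Local Notation dl := (@dlt C (4 * l) l).
Local Notation ptb := (@ptb l).

Definition inR k (s : S) : bool := inblk k s || (s == zp k).
Definition dead k (s : S) : bool :=
  ~~ s.2 && (((s.1.2 == ord0) && (if pos s is Some i then (i %/ 4 < k)%N else false))
             || ((s.1.1 == ord0) && (0 < s.1.2 <= k)%N)).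
Definition vanish (P : pred S) (f : qst) := forall s, ~~ P s -> f s = 0.

Lemma zp_lab k : (k < l)%N -> ((zp k).1.2 : nat) = k.+1.
Proof. by move=> hk; rewrite /= inordK // ltnS. Qed.

Lemma dead_inR k s : (k < l)%N -> dead k s -> inR k s = false.
Proof.
move=> hk; rewrite /dead /inR /inblk.
case: s => [[i1 lab] b] /=; case: b => //=.
case: (unliftP ord0 i1) => [i ->|->] /=.
  rewrite /pos /= liftK orbF => /andP [hl h].
  case: (@eqP _ (lift ord0 i, lab, false) (zp k)) => [[e _]|_].
    by move: e; rewrite /bump leq0n.
  rewrite orbF andbC; apply/negbTE; rewrite negb_and; apply/orP; left; apply/eqP; lia.
rewrite /pos /= unlift_none !andbF /= => /andP [h1 h2].
apply/negbTE; apply/eqP => [[e]].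
have := congr1 val e; rewrite /= inordK; lia.
Qed.

Lemma inR_dead k s : (k < l)%N -> inR k s -> dead k.+1 s.
Proof.
move=> hk; rewrite /inR /dead.
case/orP => [|/eqP ->]; last by rewrite /= inordK ?ltnS // leqnn /= orbT.
rewrite /inblk; case/andP => [/andP [-> ->]] /=.
by case: (pos s) => // i /eqP ->; rewrite leqnn.
Qed.

Lemma dead_S k s : dead k s -> dead k.+1 s.
Proof.
rewrite /dead; case/andP => -> /= /orP [/andP [-> h]|/andP [-> /andP [h1 h2]]].
  by case: (pos s) h => // i h; rewrite ltnS ltnW.
by rewrite h1 (leq_trans h2) ?orbT.
Qed.

Lemma dead_out k s : dead k s -> s.2 = false.
Proof. by case/andP => /negbTE. Qed.

Lemma lev_SS_dead k s : dead k.+1 s -> lev k.+2 s = 0.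
Proof.
rewrite /Submission.lev /=; case: ifP => hk.
  rewrite /Submission.ub /inblk /dead; case: ifP => // /andP [/andP [_ h0] hp].
  case/andP => _ /orP [/andP [_ h]|/and3P [_ h1 _]].
    by case: (pos s) hp h => // i /eqP ->; rewrite ltnn.
  by rewrite (eqP h0) in h1.
by move=> /dead_out; rewrite /dlt; case: eqP => // -> .
Qed.

Lemma ub_van k s : ~~ inR k s -> ub k s = 0.
Proof. by rewrite /inR negb_or => /andP [h _]; rewrite /Submission.ub (negbTE h). Qed.
Lemma hv2_van k s : ~~ inR k s -> hv2 k s = 0.
Proof. by rewrite /inR negb_or => /andP [h _]; rewrite /Submission.hv2 (negbTE h). Qed.
Lemma hv3_van k s : ~~ inR k s -> hv3 k s = 0.
Proof. by rewrite /inR negb_or => /andP [h _]; rewrite /Submission.hv3 (negbTE h). Qed.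
Lemma dlz_van k s : ~~ inR k s -> dl (zp k) s = 0.
Proof. by rewrite /inR negb_or => /andP [_ h]; rewrite /dlt (negbTE h). Qed.

Lemma phase_van (P : pred S) v c f : vanish P v -> vanish P f -> vanish P (apply_op (phase v c) f).
Proof. by move=> hv hf s hs; rewrite apply_phase hv // hf // add0r mulr0. Qed.

Lemma oracle_van (P : pred S) x f : vanish P f -> vanish P (oracle x f).
Proof. by move=> hf s hs; rewrite /oracle hf // mulr0. Qed.

Lemma inner_subr (v f g : qst) : inner v (fun s => f s - g s) = inner v f - inner v g.
Proof. rewrite /inner -sumrB; apply: eq_bigr => s _; ring. Qed.


Lemma lev_S k : (k < l)%N -> lev k.+1 = ub k.
Proof. by move=> hk; rewrite /Submission.lev /= hk. Qed.

Lemma inner_lev_SS k : inner (lev k.+2) (lev k.+2) = 1.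
Proof.
rewrite /Submission.lev /=; case: ifP => hk.
  have -> : ub k.+1 = ub (Ordinal hk) by [].
  rewrite inner_ub sum4 !ub_pt; by field.
by rewrite inner_dlt /dlt eqxx.
Qed.

Lemma Bk_van k f : vanish (inR k) f -> vanish (inR k) (apply_op (Bk C k) f).
Proof.
move=> hf s hs; rewrite /Bk apply_qmul.
have h1 : vanish (inR k) (apply_op (qmul (phase (hv2 k) (om C)) (phase (hv3 k) (-1 - om C))) f).
  move=> s' hs'; rewrite apply_qmul.
  have h0 : vanish (inR k) (apply_op (phase (hv3 k) (-1 - om C)) f).
    by apply: phase_van => // t ht; apply: hv3_van.
  have h2 : vanish (inR k) (hv2 k) by move=> t ht; apply: hv2_van.
  by have := phase_van (om C) h2 h0; apply.
have hd : vanish (inR k) (fun s => ub k s - dl (zp k) s).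
  by move=> t ht; rewrite ub_van // dlz_van // subr0.
by have := phase_van (-1) hd h1; apply.
Qed.

Lemma step (k : 'I_l) x (a : C) (J : qst) : vanish (dead k) J ->
  exists J' : qst, vanish (dead k.+1) J' /\
  forall s, apply_op (Tk C k.+1) (oracle x (apply_op (Bk C k) (oracle x (fun s => a * ub k s + J s)))) s
     = a * Ablk C x k * lev k.+2 s + J' s.
Proof.
move=> hJ.
have hk := ltn_ord k.
set y0 := oracle x (ub k).
set phi := oracle x (apply_op (Bk C k) y0).
set A := Ablk C x k.
have hphi : vanish (inR k) phi.
  apply: oracle_van; apply: Bk_van; apply: oracle_van => s hs; exact: ub_van.
exists (fun s => a * (phi s - A * ub k s) + J s); split.
  move=> s hs.
  have hs' : ~~ dead k s by apply: contra hs; apply: dead_S.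
  have hR : ~~ inR k s by apply: contra hs; apply: inR_dead.
  by rewrite hJ // ub_van // hphi // mulr0 subr0 mulr0 addr0.
have hoJ : vanish (dead k) (oracle x J) by apply: oracle_van.
have disj : forall v, vanish (inR k) v -> forall s, v s = 0 \/ oracle x J s = 0.
  move=> v hv s; case hd: (dead k s).
    by left; apply: hv; rewrite dead_inR.
  by right; apply: hoJ; rewrite hd.
have E1 : oracle x (fun s => a * ub k s + J s) = fun s => a * y0 s + oracle x J s.
  by apply: functional_extensionality => s; rewrite oracle_lin.
have E2 : apply_op (Bk C k) (fun s => a * y0 s + oracle x J s)
          = fun s => a * apply_op (Bk C k) y0 s + oracle x J s.
  apply: functional_extensionality => s; rewrite apply_lin; congr (_ + _).
  rewrite /Bk apply_qmul.
  rewrite (apply_ext _ (g := oracle x J)); last first.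
    move=> s'; rewrite apply_qmul (apply_ext _ (g := oracle x J)).
      by apply: apply_phase_id; apply: disj => t ht; apply: hv2_van.
    by apply: apply_phase_id; apply: disj => t ht; apply: hv3_van.
  by apply: apply_phase_id; apply: disj => t ht; rewrite ub_van // dlz_van // subr0.
have E3 : oracle x (fun s => a * apply_op (Bk C k) y0 s + oracle x J s)
          = fun s => a * phi s + J s.
  apply: functional_extensionality; intros z; rewrite oracle_lin oracleK. done.
move=> s0; rewrite E1 E2 E3.
rewrite apply_lin /Tk (lev_S hk).
rewrite (@apply_phase_id C (4 * l) l _ _ J); last first.
  move=> t; case hd: (dead k t); last by right; apply: hJ; rewrite hd.
  left; rewrite ub_van ?dead_inR // lev_SS_dead ?subr0 //; exact: dead_S.
rewrite apply_phase.
have hn : inner (fun s => ub k s - lev k.+2 s) (fun s => ub k s - lev k.+2 s) = 2.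
  rewrite inner_subl !inner_subr inner_lev_SS.
  rewrite (@inner_disj C (4 * l) l (lev k.+2) (ub k)); last first.
    move=> t; case hR: (inR k t); last by right; rewrite ub_van ?hR.
    by left; apply: lev_SS_dead; apply: inR_dead.
  rewrite (@inner_disj C (4 * l) l (ub k) (lev k.+2)); last first.
    move=> t; case hR: (inR k t); last by left; rewrite ub_van ?hR.
    by right; apply: lev_SS_dead; apply: inR_dead.
  rewrite inner_ub sum4 !ub_pt; by field.
have hi : inner (fun s => ub k s - lev k.+2 s) phi = A.
  rewrite inner_subl /phi Acomp (@inner_disj C (4 * l) l (lev k.+2)) ?subr0 //.
  move=> t; case hR: (inR k t); last by right; apply: hphi; rewrite hR.
  by left; apply: lev_SS_dead; apply: inR_dead.
rewrite hn hi.
rewrite (_ : (-1 - 1) / 2 = -1 :> C); last by field.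
ring.
Qed.

End Inv.

Section Fin.
Variable C : numClosedFieldType.
Variable l : nat.
Hypothesis hl : (0 < l)%N.
Local Notation S := (basis (4 * l) l).
Local Notation qst := (qstate C (4 * l) l).
Local Notation ub := (@ub C l).
Local Notation lev := (@lev C l).
Local Notation inblk := (@inblk l).
Local Notation pos := (@pos l).
Local Notation zp := (zp l).
Local Notation dl := (@dlt C (4 * l) l).
Local Notation ptb := (@ptb l).
Local Notation U := (@Ualg C l).

Lemma Ualg_odd k : U k.*2.+1 = Bk C k.
Proof. by rewrite /Ualg /= odd_double /= uphalf_double. Qed.

Lemma Ualg_even k : U k.*2 = Tk C k.
Proof. by rewrite /Ualg odd_double half_double. Qed.

Lemma inv_base x : run U 0 x = fun s => 1 * lev 1 s + 0.
Proof.
have k0 : 'I_l := Ordinal hl.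
rewrite /= (Ualg_even 0) /Tk (lev_S C hl).
have -> : lev 0 = dl (pstart l) by [].
apply: functional_extensionality => s.
have hi : forall s, @init_state C (4 * l) l s = dl (pstart l) s by [].
rewrite (apply_ext _ hi) apply_phase !inner_subl !inner_dlt.
have ub0 : ub 0 (pstart l) = 0 by rewrite /Submission.ub /inblk /pos /= unlift_none ?andbF.
have dp : forall j, dl (pstart l) (ptb (Ordinal hl) j) = 0.
  by move=> j; rewrite /dlt /pstart /ptb; case: eqP => // [[]] /eqP; rewrite eq_sym (negbTE (neq_lift _ _)).
have -> : ub 0 = ub (Ordinal hl) by [].
rewrite !inner_ub !sum4 !dp !(ub_pt C) /dlt eqxx ub0 (_ : true%:R = 1 :> C) //.
rewrite (_ : (-1 - 1) / (1 - 0 - 2^-1 * (0 - 2^-1 + (0 - 2^-1) + (0 - 2^-1) + (0 - 2^-1))) = -1 :> C);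
  last by field.
ring.
Qed.

Lemma inv x k : (k <= l)%N -> exists J : qst, vanish (dead k) J /\
  run U k.*2 x = fun s => (\prod_(b < k) Ablk C x b) * lev k.+1 s + J s.
Proof.
elim: k => [|k IH] hk.
  exists (fun _ => 0); split => //; rewrite big_ord0; exact: inv_base.
have [J [hJ hr]] := IH (ltnW hk).
have [J' [hJ' he]] := @step C l (Ordinal hk) x (\prod_(b < k) Ablk C x b) J hJ.
exists J'; split => //.
rewrite doubleS /= Ualg_odd.
have -> : U k.*2.+2 = Tk C k.+1 by rewrite -doubleS Ualg_even.
rewrite hr (lev_S C hk); apply: functional_extensionality => s.
by rewrite he big_ord_recr.
Qed.

End Fin.

Lemma norm_Fq (C : numClosedFieldType) b0 b1 b2 b3 :
  `|Fq C b0 b1 b2 b3| ^+ 2 = ((b0 + b1 + b2 + b3 == 2)%N)%:R.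
Proof.
rewrite normCK /Fq.
by case: b0; case: b1; case: b2; case: b3;
  rewrite /= ?mul0r ?rmorph0 ?mulr0 ?rmorph1 ?mulr1 ?unit_om ?unit_c3.
Qed.

Lemma wsum l (x : 'I_(4 * l) -> bool) (i : 'I_l) : (\sum_(j < 4) (x (blk i j) : nat) =
   bitn x (4 * i) + bitn x (4 * i + 1) + bitn x (4 * i + 2) + bitn x (4 * i + 3))%N.
Proof.
rewrite !big_ord_recr big_ord0 /= add0n.
rewrite -{1}(addn0 (4 * i)%N) -!bitn_blk //.
by congr (_ + _ + _ + _); congr (nat_of_bool (x (blk i _))); apply: val_inj; rewrite /= inordK.
Qed.

Lemma prob_true (C : numClosedFieldType) l (hl : (0 < l)%N) x :
  prob_out (run (@Ualg C l) (l.*2) x) true = (exact2 l x)%:R.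
Proof.
have [J [hJ hr]] := inv C hl x (leqnn l).
have hlev : forall s, lev C l.+1 s = dlt C (pend l) s.
  by move=> s; rewrite /lev /= ltnn.
rewrite /prob_out hr (bigD1 (pend l)) //= [X in _ + X = _]big1; last first.
  move=> s /andP [h1 h2]; rewrite hlev /dlt (negbTE h2) mulr0 add0r.
  rewrite hJ ?normr0 ?expr0n //; apply/negP => /dead_out; by rewrite (eqP h1).
rewrite addr0 hlev /dlt eqxx mulr1 hJ ?addr0; last by apply/negP => /dead_out.
rewrite normr_prod -prodrXl.
under eq_bigr => b _ do rewrite /Ablk norm_Fq.
rewrite exact2E.
case: forallP => [h|h].
  rewrite big1 // => b _; have := h b; rewrite wsum => /eqP; rewrite /Ablk => ->; by [].
have [b hb] : exists b : 'I_l, ~~ (\sum_(j < 4) (x (blk b j) : nat) == 2)%N.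
  apply/existsP; rewrite -negb_forall; by apply/forallP.
rewrite (bigD1 b) //= wsum in hb *; by rewrite (negbTE hb) mul0r.
Qed.

Lemma QE_upper (C : numClosedFieldType) l : (0 < l)%N -> exact_qalg C (exact2 l) (2 * l).
Proof.
move=> hl; exists l, (@Ualg C l); split; first by move=> k _; apply: Ualg_unitary.
move=> x; rewrite mul2n.
have := prob_split (run (@Ualg C l) l.*2 x); rewrite run_norm; last by move=> k _; apply: Ualg_unitary.
have hp := prob_true C hl x.
case: (exact2 l x) hp => hp; rewrite hp; first by [].
by rewrite mulr0n add0r.
Qed.

Local Close Scope ring_scope.

Theorem theorem3p2 (C : numClosedFieldType) (l : nat) :
  (1 <= l)%N -> QE_is C (exact2 l) (2 * l) /\ D_is (exact2 l) (4 * l).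
Proof.
move=> hl; split; last exact: D_exact2.
split; first exact: QE_upper.
by move=> t; apply: QE_exact2_lower.
Qed.
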